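(* Let $\Omega\subset\mathbb{Z}_2^n\setminus\{\mathbf 0\}$ be nonempty and such that the Hamming weights $s(\beta)$, $\beta\in\Omega$, are either all even or all odd. Let $k=\min_{\beta\in\Omega}s(\beta)$ and let $H_\Omega(t)$ be the transition matrix of $\mathrm{NEPS}(P_3,\ldots,P_3;\Omega)$. Then $H_\Omega\!\left(\frac{2\pi}{(\sqrt2)^k}\right)=I$; that is, $\mathrm{NEPS}(P_3,\ldots,P_3;\Omega)$ is periodic at time $\frac{2\pi}{(\sqrt2)^k}$.
   Context: $P_3$ is the path on three vertices. For graphs $G_1,\dots,G_n$ and $\Omega\subset\mathbb{Z}_2^n\setminus\{\mathbf 0\}$, $\mathrm{NEPS}(G_1,\dots,G_n;\Omega)$ is the graph on $V(G_1)\times\cdots\times V(G_n)$ with adjacency matrix $\sum_{\beta\in\Omega}A_1^{\beta_1}\otimes\cdots\otimes A_n^{\beta_n}$, $A_i$ the adjacency matrix of $G_i$ (equivalently, $(x_i)$ and $(y_i)$ are adjacent iff for some $\beta\in\Omega$, $x_i=y_i$ when $\beta_i=0$ and $x_iy_i\in E(G_i)$ when $\beta_i=1$). The Hamming weight $s(\beta)$ is the number of entries of $\beta$ equal to $1$. The transition matrix of a graph with adjacency matrix $A$ is $H(t)=\exp(-itA)$. A graph is periodic at time $\tau\neq0$ if $H(\tau)=\gamma I$ for some $\gamma$ with $|\gamma|=1$. *)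

(* Defs.v *)
From mathcomp Require Import all_boot.
From Stdlib Require Import Reals.

Set Implicit Arguments.
Unset Strict Implicit.
Unset Printing Implicit Defensive.

Definition C := (R * R)%type.
Definition C0 : C := (0%R, 0%R).
Definition C1 : C := (1%R, 0%R).
Definition Cadd (a b : C) : C := ((fst a + fst b)%R, (snd a + snd b)%R).
Definition Cmul (a b : C) : C :=
  ((fst a * fst b - snd a * snd b)%R, (fst a * snd b + snd a * fst b)%R).
Definition RtoC (r : R) : C := (r, 0%R).

Definition Cconv (u : nat -> C) (l : C) : Prop :=
  Un_cv (fun N => fst (u N)) (fst l) /\ Un_cv (fun N => snd (u N)) (snd l).

Definition Csum (T : finType) (P : pred T) (f : T -> C) : C :=
  foldr (fun x acc => Cadd (f x) acc) C0 (enum P).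
Definition Rsum (T : finType) (P : pred T) (f : T -> R) : R :=
  foldr (fun x acc => (f x + acc)%R) 0%R (enum P).

Definition cmx (V : finType) := V -> V -> C.
Definition cmx1 (V : finType) : cmx V := fun x y => if x == y then C1 else C0.
Definition cmxmul (V : finType) (M N : cmx V) : cmx V :=
  fun x y => Csum predT (fun z => Cmul (M x z) (N z y)).
Fixpoint cmxpow (V : finType) (M : cmx V) (m : nat) : cmx V :=
  match m with
  | O => @cmx1 V
  | S m' => cmxmul (cmxpow M m') M
  end.
Definition cmxscale (V : finType) (c : C) (M : cmx V) : cmx V :=
  fun x y => Cmul c (M x y).

Fixpoint exp_partial (V : finType) (M : cmx V) (N : nat) : cmx V :=
  match N with
  | O => @cmx1 V
  | S N' => fun x y => Cadd (exp_partial M N' x y)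
                          (Cmul (RtoC (/ INR (Factorial.fact N))) (cmxpow M N x y))
  end.

Definition is_mexp (V : finType) (M : cmx V) (E : cmx V) : Prop :=
  forall x y, Cconv (fun N => exp_partial M N x y) (E x y).

Definition cmx_of_real (V : finType) (A : V -> V -> R) : cmx V :=
  fun x y => RtoC (A x y).

(* H(t) = exp(-i t A) is (equal to) Ht *)
Definition is_transition (V : finType) (A : V -> V -> R) (t : R) (Ht : cmx V)
  : Prop := is_mexp (cmxscale (0%R, (- t)%R) (cmx_of_real A)) Ht.

Definition P3_adj (a b : 'I_3) : bool :=
  (a.+1 == b :> nat) || (b.+1 == a :> nat).

Definition Z2n (n : nat) := {ffun 'I_n -> bool}.
Definition hamming (n : nat) (b : Z2n n) : nat := #|[pred i | b i]|.

Definition adjR (T : finType) (e : rel T) : T -> T -> R :=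
  fun a b => if e a b then 1%R else 0%R.

Definition adj_pow (T : finType) (e : rel T) (bi : bool) : T -> T -> R :=
  if bi then adjR e else (fun a b => if a == b then 1%R else 0%R).

Definition Rprod_ord (n : nat) (f : 'I_n -> R) : R :=
  foldr (fun i acc => (f i * acc)%R) 1%R (enum 'I_n).

(* adjacency matrix of NEPS(G,...,G; Omega) (n copies of G = (T, e)):
   sum_{beta in Omega} A^{beta_1} (x) ... (x) A^{beta_n} *)
Definition NEPS_adj (T : finType) (e : rel T) (n : nat) (Omega : {set Z2n n})
  : {ffun 'I_n -> T} -> {ffun 'I_n -> T} -> R :=
  fun x y => Rsum (mem Omega) (fun beta => Rprod_ord (fun i => adj_pow e (beta i) (x i) (y i))).

(* Main.v *)
Set Warnings "-notation-overridden -ambiguous-paths".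
Require Import Defs.
From mathcomp Require Import all_boot all_algebra.
From Stdlib Require Import Reals ZArith Lia FunctionalExtensionality.
From mathcomp Require Import Rstruct.
From mathcomp Require Import ring lra.
Import GRing.Theory Num.Theory.
Set Implicit Arguments.
Unset Strict Implicit.
Local Open Scope ring_scope.

Ltac mc := rewrite ?(RplusE, RmultE, RminusE, RoppE, RdivE, RinvE, R0E, R1E).
Ltac cr := mc; ring.
Definition s2 : R := sqrt 2.
Lemma s2s2 : s2 * s2 = 2.
Proof. rewrite /s2 -RmultE sqrt_sqrt //; exact: (Rlt_le _ _ Rlt_0_2). Qed.

Definition nu (s : 'I_3) : R :=
  match nat_of_ord s with 0 => 0 | 1 => 1 | _ => GRing.opp 1 end.
Definition mu (s : 'I_3) (b : bool) : R := if b then s2 * nu s else 1.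
Definition vec (s a : 'I_3) : R :=
  match nat_of_ord s, nat_of_ord a with
  | 0, 0 => 1 | 0, 1 => 0 | 0, _ => GRing.opp 1
  | 1, 1 => s2 | 2, 1 => - s2 | _, _ => 1 end.
Definition nrm (s : 'I_3) : R := if nat_of_ord s == 0%N then 2 else 4.

Lemma eig3 s b c : \sum_(a < 3) vec s a * adj_pow P3_adj b a c = mu s b * vec s c.
Proof.
have h := s2s2.
rewrite !big_ord_recr big_ord0 /=.
case: s => [[|[|[|s]]] Hs] //; case: c => [[|[|[|c]]] Hc] //; case: b;
 rewrite /adj_pow /adjR /P3_adj /vec /mu /nu /=; mc; try nra.
Qed.

Lemma comp3 a c : \sum_(s < 3) vec s a * vec s c / nrm s = if a == c then 1 else 0.
Proof.
have h := s2s2.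
rewrite !big_ord_recr big_ord0 /=.
case: a => [[|[|[|a]]] Ha] //; case: c => [[|[|[|c]]] Hc] //;
 rewrite /vec /nrm /=; mc; try (field; nra). rewrite mulrNN h; field; nra.
Qed.

Lemma Csum_scal (T : finType) (c : Defs.C) (f : T -> R) :
  Csum predT (fun x => Cmul c (RtoC (f x))) = Cmul c (RtoC (\sum_x f x)).
Proof.
rewrite /Csum.
have H : forall s, foldr (fun x acc => Cadd (Cmul c (RtoC (f x))) acc) C0 s
   = Cmul c (RtoC (\sum_(x <- s) f x)).
  elim => [|a s IH] /=; rewrite ?big_nil ?big_cons.
    by case: c => a b; rewrite /Cmul /RtoC /C0 /=; congr pair; cr.
  by rewrite IH; clear IH; case: c => a' b; rewrite /Cmul /Cadd /RtoC /=; congr pair; cr.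
by rewrite H big_enum.
Qed.

Lemma Rsum_big (T : finType) (P : pred T) (f : T -> R) :
  Rsum P f = \sum_(x in P) f x.
Proof.
rewrite /Rsum -big_enum; elim: (enum P) => [|a s IH] /=; rewrite ?big_nil ?big_cons //.
by rewrite IH.
Qed.

Lemma Rprod_big (n : nat) (f : 'I_n -> R) : Rprod_ord f = \prod_i f i.
Proof.
rewrite /Rprod_ord -big_enum; elim: (enum _) => [|a s IH] /=; rewrite ?big_nil ?big_cons //.
by rewrite IH.
Qed.

Section Tensor.
Variable n : nat.
Variable Om : {set Z2n n}.

Definition lam (σ : {ffun 'I_n -> 'I_3}) : R := \sum_(β in Om) \prod_i mu (σ i) (β i).
Definition vx (σ x : {ffun 'I_n -> 'I_3}) : R := \prod_i vec (σ i) (x i).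
Definition wx (σ x : {ffun 'I_n -> 'I_3}) : R := \prod_i (vec (σ i) (x i) / nrm (σ i)).
Definition cc σ x y := wx σ x * vx σ y.
Definition Pj j (x y : {ffun 'I_n -> 'I_3}) : R := \sum_σ lam σ ^+ j * cc σ x y.

Lemma NEPS_big z y : NEPS_adj P3_adj Om z y =
   \sum_(β in Om) \prod_i adj_pow P3_adj (β i) (z i) (y i).
Proof. by rewrite /NEPS_adj Rsum_big; apply: eq_bigr => β _; rewrite Rprod_big. Qed.

Lemma eigV σ y : \sum_z vx σ z * NEPS_adj P3_adj Om z y = lam σ * vx σ y.
Proof.
under eq_bigr => z _ do rewrite NEPS_big big_distrr /=.
rewrite exchange_big /= /lam big_distrl /=. apply: eq_bigr => β _.
under eq_bigr => z _ do rewrite /vx -big_split /=.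
rewrite -(bigA_distr_bigA (fun i a => vec (σ i) a * adj_pow P3_adj (β i) a (y i))) /=.
rewrite -big_split /=; apply: eq_bigr => i _; exact: eig3.
Qed.

Lemma Pstep j x y : \sum_z Pj j x z * NEPS_adj P3_adj Om z y = Pj j.+1 x y.
Proof.
under eq_bigr => z _ do rewrite /Pj big_distrl /=.
rewrite exchange_big /=; apply: eq_bigr => σ _.
under eq_bigr => z _ do rewrite /cc -!mulrA.
rewrite -big_distrr -big_distrr /= eigV exprS /cc; ring.
Qed.

Lemma P0 x y : Pj 0 x y = if x == y then 1 else 0.
Proof.
rewrite /Pj.
under eq_bigr => σ _ do rewrite expr0 mul1r /cc /wx /vx -big_split /=.
rewrite -(bigA_distr_bigA (fun i s => vec s (x i) / nrm s * vec s (y i))) /=.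
have E : forall i, \sum_s vec s (x i) / nrm s * vec s (y i) = if x i == y i then 1 else 0.
  move=> i; rewrite -comp3; apply: eq_bigr => s _; ring.
under eq_bigr => i _ do rewrite E.
case: eqVneq => [-> | Hxy].
  by apply: big1 => i _; rewrite eqxx.
case: (pickP (fun i => x i != y i)) => [i Hi | H].
  by rewrite (bigD1 i) //= (negbTE Hi) mul0r.
exfalso; move/eqP: Hxy; apply; apply/ffunP => i.
by have := H i => /= /negbFE /eqP.
Qed.

End Tensor.

 

Fixpoint cp (w : Defs.C) (j : nat) : Defs.C :=
  match j with O => Defs.C1 | S j' => Cmul (cp w j') w end.

Section Pow.
Variable n : nat.
Variable Om : {set Z2n n}.
Variable t : R.
Let A := NEPS_adj P3_adj Om.
Let w : Defs.C := (0%R, (- t)%R).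
Let M := cmxscale w (cmx_of_real A).

Lemma cmxpow_eq j x y : cmxpow M j x y = Cmul (cp w j) (RtoC (Pj Om j x y)).
Proof.
elim: j x y => [|j IH] x y.
  rewrite /= P0 /cmx1 /Cmul /RtoC /=; case: (x == y); rewrite /Defs.C1 /Defs.C0 /=;
  congr pair; cr.
rewrite /= /cmxmul.
have -> : (fun z => Cmul (cmxpow M j x z) (M z y)) =
          (fun z => Cmul (cp w j.+1) (RtoC (Pj Om j x z * A z y))).
  apply: functional_extensionality => z; rewrite IH /M /cmxscale /cmx_of_real /=.
  case: (cp w j) => a b; rewrite /Cmul /RtoC /w /=; congr pair; cr.
by rewrite Csum_scal Pstep.
Qed.
End Pow.

Fixpoint ER (th : R) (N : nat) : R :=
  match N with O => 1 | S N' => ER th N' + (INR (Factorial.fact N))^-1 * fst (cp (0%R, (- th)%R) N) end.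
Fixpoint EI (th : R) (N : nat) : R :=
  match N with O => 0 | S N' => EI th N' + (INR (Factorial.fact N))^-1 * snd (cp (0%R, (- th)%R) N) end.

Lemma cp_scale t l j : cp (0%R, (- (t * l))%R) j =
   (l ^+ j * fst (cp (0%R, (- t)%R) j), l ^+ j * snd (cp (0%R, (- t)%R) j)).
Proof.
elim: j => [|j IH] /=.
  rewrite /Defs.C1; congr pair; cr.
rewrite IH; case: (cp _ j) => a b /=; rewrite /Cmul /= exprS; congr pair; cr.
Qed.

Lemma ER_S th N : ER th N.+1 = ER th N + (INR (Factorial.fact N.+1))^-1 * fst (cp (0%R, (- th)%R) N.+1).
Proof. by []. Qed.
Lemma EI_S th N : EI th N.+1 = EI th N + (INR (Factorial.fact N.+1))^-1 * snd (cp (0%R, (- th)%R) N.+1).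
Proof. by []. Qed.

Section Exp.
Variable n : nat.
Variable Om : {set Z2n n}.
Variable t : R.
Let A := NEPS_adj P3_adj Om.
Let M := cmxscale (0%R, (- t)%R) (cmx_of_real A).

Lemma exp_eq N x y : exp_partial M N x y =
  (\sum_σ cc σ x y * ER (t * lam Om σ) N, \sum_σ cc σ x y * EI (t * lam Om σ) N).
Proof.
elim: N => [|N IH].
  have Hs : \sum_σ cc σ x y = if x == y then 1 else 0.
    by rewrite -(P0 Om) /Pj; apply: eq_bigr => σ _; rewrite expr0 mul1r.
  rewrite /= /cmx1.
  under eq_bigr do rewrite mulr1.
  under [X in (_, X)]eq_bigr do rewrite mulr0.
  rewrite Hs big1_eq; case: (x == y) => //.
have -> : exp_partial M N.+1 x y = Cadd (exp_partial M N x y)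
   (Cmul (RtoC (/ INR (Factorial.fact N.+1))) (cmxpow M N.+1 x y)) by [].
rewrite IH cmxpow_eq /Pj.
under [X in _ = (X, _)]eq_bigr do rewrite ER_S cp_scale mulrDr.
under [X in _ = (_, X)]eq_bigr do rewrite EI_S cp_scale mulrDr.
rewrite !big_split.
case: (cp (0%R, (- t)%R) N.+1) => a b.
set f := (INR _)^-1.
rewrite /Cadd /Cmul /RtoC; cbn [fst snd]; mc; rewrite -/f; congr pair; congr (_ + _).
  rewrite mulr0 subr0 mul0r subr0 !big_distrr /=.
  apply: eq_bigr => σ _; ring.
rewrite mulr0 add0r mul0r addr0 !big_distrr /=.
apply: eq_bigr => σ _; ring.
Qed.
End Exp.

Lemma cpS w j : cp w j.+1 = Cmul (cp w j) w.
Proof. by []. Qed.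

Lemma cp_eo th K :
  cp (0%R, (- th)%R) K.*2 = ((-1) ^+ K * th ^+ K.*2, 0) /\
  cp (0%R, (- th)%R) K.*2.+1 = (0, - ((-1) ^+ K * th ^+ K.*2.+1)).
Proof.
elim: K => [|K [IH1 IH2]].
  rewrite double0 cpS /=; split; rewrite /Defs.C1 /Cmul /=; congr pair; cr.
rewrite doubleS !cpS -cpS IH2 /Cmul /=; split; congr pair; rewrite ?exprS; cr.
Qed.

Lemma A1S th K : A1 th K.+1 = A1 th K +
   (-1) ^+ K.+1 / INR (Factorial.fact K.*2.+2) * th ^+ K.*2.+2.
Proof.
change (A1 th K.+1) with (A1 th K + (-1)^K.+1 / INR (Factorial.fact (2*K.+1)%coq_nat) * th^(2*K.+1)%coq_nat)%R.
rewrite (_ : (2*K.+1)%coq_nat = K.*2.+2); last by rewrite -mul2n mulnE; lia.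
by rewrite !RpowE; mc.
Qed.

Lemma B1S th K : B1 th K.+1 = B1 th K +
   (-1) ^+ K.+1 / INR (Factorial.fact K.*2.+3) * th ^+ K.*2.+3.
Proof.
change (B1 th K.+1) with (B1 th K + (-1)^K.+1 / INR (Factorial.fact ((2*K.+1)%coq_nat + 1)%coq_nat) * th^((2*K.+1)%coq_nat + 1)%coq_nat)%R.
rewrite (_ : ((2*K.+1)%coq_nat + 1)%coq_nat = K.*2.+3); last by rewrite -mul2n mulnE; lia.
by rewrite !RpowE; mc.
Qed.

Lemma ER_eo th K : ER th K.*2 = A1 th K /\ ER th K.*2.+1 = A1 th K.
Proof.
elim: K => [|K [IH1 IH2]].
  rewrite double0 ER_S; have [_ H] := cp_eo th 0; rewrite double0 in H.
  rewrite H /A1 /=; split; mc; rewrite ?invr1 ?divr1; ring.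
have [H1 H2] := cp_eo th K.+1.
have Ha : ER th K.+1.*2 = A1 th K.+1.
  rewrite doubleS ER_S IH2 A1S -doubleS H1 /=; mc; ring.
split => //; rewrite ER_S Ha H2 /=; cr.
Qed.

Lemma EI_eo th K : EI th K.*2.+1 = - B1 th K /\ EI th K.*2.+2 = - B1 th K.
Proof.
elim: K => [|K [IH1 IH2]].
  have [_ H] := cp_eo th 0; have [H1 _] := cp_eo th 1.
  change (0.*2.+1) with (S O) in H; change (1.*2) with (S (S O)) in H1.
  rewrite double0; split.
    rewrite EI_S H /B1 /=; mc; rewrite ?invr1 ?divr1; ring.
  rewrite EI_S EI_S H H1 /B1 /=; mc; rewrite ?invr1 ?divr1; ring.
have [H1 H2] := cp_eo th K.+1.
have Ha : EI th K.+1.*2.+1 = - B1 th K.+1.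
  rewrite EI_S H2 doubleS IH2 B1S /=; mc; ring.
split => //; rewrite EI_S Ha.
have [H3 _] := cp_eo th K.+2; rewrite doubleS in H3; rewrite H3 /=; cr.
Qed.

Lemma cc_sum n (x y : {ffun 'I_n -> 'I_3}) : \sum_σ cc σ x y = if x == y then 1 else 0.
Proof. by rewrite -(P0 set0) /Pj; apply: eq_bigr => σ _; rewrite expr0 mul1r. Qed.

Lemma cv_eo (u a : nat -> R) l : (forall K, u K.*2 = a K) -> (forall K, u K.*2.+1 = a K) ->
  Un_cv a l -> Un_cv u l.
Proof.
move=> He Ho Ha eps Heps; case: (Ha eps Heps) => N HN; exists N.*2 => m Hm.
have Hu : u m = a m./2.
  rewrite -{1}(odd_double_half m); case: (odd m); rewrite ?add0n ?add1n; [exact: Ho | exact: He].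
rewrite Hu; apply: HN; apply/leP; move/leP: Hm => Hm.
by have := half_leq Hm; rewrite doubleK.
Qed.

Lemma cv_shift (u : nat -> R) l : Un_cv (fun N => u N.+1) l -> Un_cv u l.
Proof.
move=> H eps He; case: (H eps He) => N HN; exists N.+1 => m Hm.
case: m Hm => [|m] Hm; first by lia.
apply: HN; lia.
Qed.

Lemma ER_cv th : Un_cv (ER th) (cos th).
Proof.
apply: (@cv_eo _ (A1 th)); [by move=> K; case: (ER_eo th K) | by move=> K; case: (ER_eo th K) | exact: A1_cvg].
Qed.

Lemma EI_cv th : Un_cv (EI th) (- sin th).
Proof.
apply: cv_shift; apply: (@cv_eo _ (fun K => - B1 th K));
  [by move=> K; case: (EI_eo th K) | by move=> K; case: (EI_eo th K) | exact: (CV_opp _ _ (B1_cvg th))].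
Qed.

Lemma cv_const (c : R) : Un_cv (fun _ => c) c.
Proof. by move=> eps He; exists 0%nat => m _; rewrite R_dist_eq. Qed.

Lemma cv_sum (T : finType) (c : T -> R) (f : T -> nat -> R) (l : T -> R) :
  (forall x, Un_cv (f x) (l x)) ->
  Un_cv (fun N => \sum_x c x * f x N) (\sum_x c x * l x).
Proof.
move=> H.
have G : forall s : seq T, Un_cv (fun N => \sum_(x <- s) c x * f x N) (\sum_(x <- s) c x * l x).
  elim => [|a s IH].
    rewrite big_nil; apply: (Un_cv_ext (fun _ => 0)); last exact: cv_const.
    by move=> N; rewrite big_nil.
  rewrite big_cons; apply: (Un_cv_ext (fun N => c a * f a N + \sum_(x <- s) c x * f x N)).
    by move=> N; rewrite big_cons.
  apply: CV_plus => //; apply: CV_mult => //; exact: cv_const.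
exact: G.
Qed.

Definition isZ (r : R) := exists m : Z, r = IZR m.
Lemma isZ_add a b : isZ a -> isZ b -> isZ (a + b).
Proof. by case=> m -> [p ->]; exists (m + p)%Z; rewrite plus_IZR. Qed.
Lemma isZ_mul a b : isZ a -> isZ b -> isZ (a * b).
Proof. by case=> m -> [p ->]; exists (m * p)%Z; rewrite mult_IZR. Qed.
Lemma isZ_0 : isZ 0. Proof. by exists 0%Z. Qed.
Lemma isZ_1 : isZ 1. Proof. by exists 1%Z. Qed.
Lemma isZ_opp a : isZ a -> isZ (- a).
Proof. by case=> m ->; exists (- m)%Z; rewrite opp_IZR. Qed.
Lemma isZ_2 : isZ 2. Proof. by exists 2%Z. Qed.
Lemma isZ_exp a d : isZ a -> isZ (a ^+ d).
Proof. move=> Ha; elim: d => [|d IH]; [exact: isZ_1 | rewrite exprS; exact: isZ_mul]. Qed.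
Lemma isZ_nu s : isZ (nu s).
Proof.
rewrite /nu; case: s => [[|[|[|s]]] Hs] /=; [exact: isZ_0 | exact: isZ_1 | exact: (isZ_opp isZ_1) | exact: (isZ_opp isZ_1)].
Qed.

Lemma lam_int n (Om : {set Z2n n}) k σ :
  (forall β, β \in Om -> exists d, hamming β = addn k d.*2) ->
  exists L, isZ L /\ lam Om σ = s2 ^+ k * L.
Proof.
move=> Hd.
exists (\sum_(β in Om) 2 ^+ (hamming β - k)./2 * \prod_i (if β i then nu (σ i) else 1)).
split.
  apply: (big_ind isZ); [exact: isZ_0 | exact: isZ_add | move=> β _].
  apply: isZ_mul; first exact: (isZ_exp _ isZ_2).
  apply: (big_ind isZ); [exact: isZ_1 | exact: isZ_mul | move=> i _].
  case: (β i); [exact: isZ_nu | exact: isZ_1].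
rewrite /lam big_distrr /=; apply: eq_bigr => β Hβ.
have [d Hdβ] := Hd β Hβ.
have -> : \prod_i mu (σ i) (β i) =
   \prod_i ((if β i then s2 else 1) * (if β i then nu (σ i) else 1)).
  by apply: eq_bigr => i _; rewrite /mu; case: (β i); rewrite ?mulr1.
rewrite big_split /= -big_mkcond /= prodr_const.
have -> : #|[pred i | β i]| = hamming β by [].
rewrite Hdβ addKn doubleK exprD -mul2n exprM expr2 s2s2 mulrA.
by [].
Qed.

Lemma s2_neq0 : s2 != 0.
Proof. apply/eqP => h; have := s2s2; rewrite h mul0r; mc; lra. Qed.

Definition tau : R := Rmult (IZR 2) PI.

Lemma t_lam k L : (2 * PI / sqrt 2 ^ k)%R * (s2 ^+ k * L) = tau * L.
Proof.
rewrite RpowE RdivE -/s2 -/tau.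
have h : s2 ^+ k != 0 by apply: expf_neq0; exact: s2_neq0.
by rewrite mulrA divfK.
Qed.

Lemma trig_int L : isZ L -> cos (tau * L) = 1 /\ sin (tau * L) = 0.
Proof.
case=> m ->.
have Hpos : forall p, cos (tau * IZR (Zpos p)) = 1 /\ sin (tau * IZR (Zpos p)) = 0.
  move=> p; rewrite -positive_nat_Z -INR_IZR_INZ.
  have E : Rmult tau (INR (Pos.to_nat p)) = Rplus 0 (Rmult (Rmult (IZR 2) (INR (Pos.to_nat p))) PI) by rewrite /tau; mc; ring.
  by rewrite E cos_period sin_period cos_0 sin_0.
case: m => [|p|p].
- by rewrite Rmult_0_r cos_0 sin_0.
- exact: Hpos.
- have -> : Rmult tau (IZR (Zneg p)) = Ropp (Rmult tau (IZR (Zpos p))).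
    by change (IZR (Zneg p)) with (- IZR (Zpos p)); mc; ring.
  rewrite cos_neg sin_neg; have [-> ->] := Hpos p; split => //; mc; ring.
Qed.

Local Close Scope ring_scope.
Unset Implicit Arguments.
Unset Strict Implicit.

Theorem theorem3p4 (n : nat) (Omega : {set Z2n n}) (k : nat) :
  (forall beta, beta \in Omega -> beta != [ffun => false]) ->
  Omega != set0 ->
  (forall beta gamma, beta \in Omega -> gamma \in Omega ->
     odd (hamming beta) = odd (hamming gamma)) ->
  (exists2 beta, beta \in Omega & hamming beta = k) ->
  (forall beta, beta \in Omega -> leq k (hamming beta)) ->
  is_transition (NEPS_adj P3_adj Omega)
    (2 * PI / (sqrt 2) ^ k)%R
    (@cmx1 {ffun 'I_n -> 'I_3}).
Proof.
Local Open Scope ring_scope.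
move=> Hnz Hne Hpar [β0 Hβ0 Hk] Hmin.
have Hd : forall β, β \in Omega -> exists d, hamming β = addn k d.*2.
  move=> β Hβ; exists ((hamming β - k)./2).
  have Ho : odd (hamming β - k) = false.
    by rewrite oddB ?Hmin // -Hk (Hpar β β0) // addbb.
  by rewrite halfK Ho subn0 subnKC ?Hmin.
set t := (2 * PI / sqrt 2 ^ k)%R.
have Hc : forall σ, cos (t * lam Omega σ) = 1%R /\ sin (t * lam Omega σ) = 0%R.
  move=> σ; have [L [HZ ->]] := lam_int σ Hd.
  by rewrite (RmultE t) /t t_lam -(RmultE tau); apply: trig_int.
rewrite /is_transition /is_mexp => x y; split.
- apply: (Un_cv_ext (fun N => (\sum_σ cc σ x y * ER (t * lam Omega σ) N))).
    by move=> N; rewrite exp_eq.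
  have -> : fst (cmx1 x y) = (\sum_σ cc σ x y * cos (t * lam Omega σ)).
    under eq_bigr => σ _ do rewrite (proj1 (Hc σ)) GRing.mulr1.
    by rewrite cc_sum /cmx1; case: (x == y).
  apply: cv_sum => σ; exact: ER_cv.
- apply: (Un_cv_ext (fun N => (\sum_σ cc σ x y * EI (t * lam Omega σ) N))).
    by move=> N; rewrite exp_eq.
  have -> : snd (cmx1 x y) = (\sum_σ cc σ x y * - sin (t * lam Omega σ)).
    under eq_bigr => σ _ do rewrite (proj2 (Hc σ)) GRing.oppr0 GRing.mulr0.
    by rewrite big1_eq /cmx1; case: (x == y).
  apply: cv_sum => σ; exact: EI_cv.
Qed.
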